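(* Let $G=(V,E)$ be a disk triangulation graph with base vertex $v_0$. For every integer $n>0$, the outer sphere $S_{\mathcal O}(n)$ is a cycle graph.
   Context: A disk triangulation graph is the 1-skeleton of a locally finite triangulation of the open unit disk (simple, connected). The norm $|v|$ of a vertex is its graph distance from $v_0$. The outer sphere of radius $n$, $S_{\mathcal O}(n)$, is the graph whose vertices are those $v$ with $|v|=n$ for which there exists a path from $v$ to infinity containing no other vertex of norm $n$, and whose edges are the edges of $E$ with both endpoints in this vertex set. A cycle graph is a finite connected graph all of whose vertices have degree two. *)

(* Defs.v *)
From Stdlib Require Import List Relations Arith.
Import ListNotations.

Section Defs.
Variable V : Type.
Variable adj : V -> V -> Prop.
Variable tri : V -> V -> V -> Prop.      (* the 2-simplices (faces) *)

Fixpoint walk (l : list V) : Prop :=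
  match l with
  | x :: ((y :: _) as t) => adj x y /\ walk t
  | _ => True
  end.

Inductive walk_move : list V -> list V -> Prop :=
  | move_backtrack (l1 l2 : list V) (u w : V) :
      adj u w -> walk_move (l1 ++ [u] ++ l2) (l1 ++ [u; w; u] ++ l2)
  | move_triangle (l1 l2 : list V) (u x w : V) :
      tri u x w -> walk_move (l1 ++ [u; w] ++ l2) (l1 ++ [u; x; w] ++ l2).

Definition walk_homotopic : list V -> list V -> Prop :=
  clos_refl_sym_trans (list V) walk_move.

Inductive within : nat -> V -> V -> Prop :=
  | within_refl n x : within n x x
  | within_step n x y z : adj x y -> within n y z -> within (S n) x z.

(** [disk_triangulation adj tri]: (adj,tri) is the 1-skeleton and face set of a
    locally finite triangulation of the open disk (= simply connected,
    non-compact surface without boundary), described combinatorially. *)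
Definition disk_triangulation : Prop :=
  (forall x y, adj x y -> adj y x) /\
  (forall x, ~ adj x x) /\
  (forall a b c, tri a b c -> adj a b /\ adj b c /\ adj a c) /\
  (forall a b c, tri a b c -> tri b a c /\ tri a c b) /\
  (* every edge lies in exactly two faces (surface without boundary) *)
  (forall a b, adj a b -> exists c d, c <> d /\ tri a b c /\ tri a b d /\
      forall e, tri a b e -> e = c \/ e = d) /\
  (forall v, exists l : list V, forall w, adj v w <-> In w l) /\
  (* the link of every vertex is a single cycle (connected) *)
  (forall v u w, adj v u -> adj v w ->
      clos_refl_trans V (fun a b => tri v a b) u w) /\
  (exists v : V, True) /\
  (forall x y, exists n, within n x y) /\
  (* infinite (non-compact) *)
  (forall l : list V, exists v, ~ In v l) /\
  (forall v l, walk (v :: l ++ [v]) -> walk_homotopic (v :: l ++ [v]) [v]).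

Definition norm (v0 v : V) (n : nat) : Prop :=
  within n v0 v /\ forall m, m < n -> ~ within m v0 v.

Definition outer_sphere (v0 : V) (n : nat) (v : V) : Prop :=
  norm v0 v n /\
  exists p : nat -> V,
    p 0 = v /\
    (forall i j, p i = p j -> i = j) /\
    (forall i, adj (p i) (p (S i))) /\
    (forall i, 0 < i -> ~ norm v0 (p i) n).

Definition induced_cycle_graph (S : V -> Prop) : Prop :=
  (exists l : list V, forall v, S v <-> In v l) /\
  (exists v, S v) /\
  (forall x y, S x -> S y ->
     exists l, walk (x :: l) /\ last l x = y /\ Forall S l) /\
  (forall v, S v -> exists a b, a <> b /\ adj v a /\ adj v b /\ S a /\ S b /\
     forall c, adj v c -> S c -> c = a \/ c = b).

End Defs.

Arguments walk {V}. Arguments walk_homotopic {V}. Arguments within {V}.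
Arguments disk_triangulation {V}. Arguments norm {V}.
Arguments outer_sphere {V}. Arguments induced_cycle_graph {V}.

(* Main.v *)
Require Import Defs.
From Stdlib Require Import List Relations Arith Lia Classical ClassicalEpsilon Bool FinFun.
Import ListNotations.

Section Main.
Variable V : Type.
Variable adj : V -> V -> Prop.
Variable tri : V -> V -> V -> Prop.
Variable v0 : V.
Variable n : nat.
Hypothesis Hn : 0 < n.
Hypothesis Hsym : forall x y, adj x y -> adj y x.
Hypothesis Hirr : forall x, ~ adj x x.
Hypothesis Htadj : forall a b c, tri a b c -> adj a b /\ adj b c /\ adj a c.
Hypothesis Htperm : forall a b c, tri a b c -> tri b a c /\ tri a c b.
Hypothesis Hedge : forall a b, adj a b -> exists c d, c <> d /\ tri a b c /\ tri a b d /\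
      forall e, tri a b e -> e = c \/ e = d.
Hypothesis Hfin : forall v, exists l : list V, forall w, adj v w <-> In w l.
Hypothesis Hlink : forall v u w, adj v u -> adj v w ->
      clos_refl_trans V (fun a b => tri v a b) u w.
Hypothesis Hconn : forall x y, exists n, within adj n x y.
Hypothesis Hinf : forall l : list V, exists v, ~ In v l.
Hypothesis Hsc : forall v l, walk adj (v :: l ++ [v]) -> walk_homotopic adj tri (v :: l ++ [v]) [v].

Definition eqv (x y : V) : bool := if excluded_middle_informative (x = y) then true else false.
Lemma eqv_spec x y : reflect (x = y) (eqv x y).
Proof. unfold eqv; destruct (excluded_middle_informative (x = y)); constructor; auto. Qed.
Lemma eqv_refl x : eqv x x = true.
Proof. destruct (eqv_spec x x); congruence. Qed.
Lemma eqv_neq x y : x <> y -> eqv x y = false.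
Proof. intro H; destruct (eqv_spec x y); congruence. Qed.
Lemma eqv_sym x y : eqv x y = eqv y x.
Proof. destruct (eqv_spec x y); destruct (eqv_spec y x); congruence. Qed.

Lemma tri12 a b c : tri a b c -> tri b a c. Proof. intro H; apply Htperm in H; tauto. Qed.
Lemma tri23 a b c : tri a b c -> tri a c b. Proof. intro H; apply Htperm in H; tauto. Qed.
Lemma tri13 a b c : tri a b c -> tri c b a.
Proof. intro H. apply tri12, tri23, tri12. exact H. Qed.
Lemma tri_ab a b c : tri a b c -> a <> b.
Proof. intros H E; subst. apply (Hirr b). apply (Htadj _ _ _ H). Qed.
Lemma tri_bc a b c : tri a b c -> b <> c.
Proof. intros H E; subst. apply (Hirr c). apply (Htadj _ _ _ H). Qed.
Lemma tri_ac a b c : tri a b c -> a <> c.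
Proof. intros H E; subst. apply (Hirr c). apply (Htadj _ _ _ H). Qed.
Lemma adj_neq a b : adj a b -> a <> b.
Proof. intros H E; subst; exact (Hirr _ H). Qed.

Lemma within_mono m x y : within adj m x y -> forall k, m <= k -> within adj k x y.
Proof.
  induction 1; intros k Hk. constructor.
  destruct k. lia. econstructor; eauto. apply IHwithin; lia.
Qed.
Lemma within_snoc m x y : within adj m x y -> forall z, adj y z -> within adj (S m) x z.
Proof.
  induction 1; intros w Hw.
  - apply within_step with w; auto. constructor.
  - apply within_step with y; auto.
Qed.
Lemma within_sym m x y : within adj m x y -> within adj m y x.
Proof.
  induction 1. constructor. apply within_snoc with y; auto.
Qed.
Lemma within0 x y : within adj 0 x y -> x = y.
Proof. intro H; inversion H; auto. Qed.
Lemma within_split k u w : within adj k u w -> forall k', k' <= k ->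
  exists w', within adj k' u w' /\ within adj (k - k') w' w.
Proof.
  induction 1; intros k' Hk.
  - exists x; split; constructor.
  - destruct k' as [|k'].
    + exists x; split. constructor. simpl. econstructor; eauto.
    + destruct (IHwithin k') as [w' [H1 H2]]. lia.
      exists w'; split. econstructor; eauto. simpl. auto.
Qed.

Lemma least_ex (P : nat -> Prop) : (exists k, P k) -> exists k, P k /\ forall m, m < k -> ~ P m.
Proof.
  intros [k Hk]. induction k as [k IH] using lt_wf_ind.
  destruct (classic (exists m, m < k /\ P m)) as [[m [Hm Pm]]|H].
  - exact (IH m Hm Pm).
  - exists k; split; auto. intros m Hm Pm; apply H; eauto.
Qed.

Lemma ex_norm v : exists k, norm adj v0 v k.
Proof. destruct (least_ex _ (Hconn v0 v)) as [k [H1 H2]]. exists k; split; auto. Qed.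
Definition N v := proj1_sig (constructive_indefinite_description _ (ex_norm v)).
Lemma N_spec v : norm adj v0 v (N v).
Proof. unfold N; destruct (constructive_indefinite_description _ _); auto. Qed.
Lemma N_within v : within adj (N v) v0 v.
Proof. apply N_spec. Qed.
Lemma N_min v m : within adj m v0 v -> N v <= m.
Proof.
  intro H. destruct (le_lt_dec (N v) m); auto. exfalso. apply (proj2 (N_spec v) m); auto.
Qed.
Lemma norm_N v k : norm adj v0 v k <-> k = N v.
Proof.
  split.
  - intros [H1 H2]. pose proof (N_min _ _ H1). destruct (le_lt_dec k (N v)).
    lia. exfalso. apply (H2 (N v)); auto. apply N_within.
  - intros ->; apply N_spec.
Qed.
Lemma N_v0 : N v0 = 0.
Proof. pose proof (N_min v0 0 (within_refl _ _ _ _)); lia. Qed.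
Lemma N0 v : N v = 0 -> v = v0.
Proof. intro H. pose proof (N_within v) as W. rewrite H in W. symmetry; apply within0; auto. Qed.
Lemma N_adj u w : adj u w -> N w <= S (N u).
Proof. intro H. apply N_min. apply within_snoc with u; auto. apply N_within. Qed.
Lemma N_adj2 u w : adj u w -> N u <= S (N w).
Proof. intro H. apply N_adj. auto. Qed.
Lemma withinS_inv k x z : within adj (S k) x z -> x = z \/ exists y, adj x y /\ within adj k y z.
Proof. intro H; inversion H; subst; eauto. Qed.
Lemma N_down v : 0 < N v -> exists u, adj v u /\ S (N u) = N v.
Proof.
  intro H. pose proof (within_sym _ _ _ (N_within v)) as W.
  destruct (N v) as [|k] eqn:E. lia.
  destruct (withinS_inv _ _ _ W) as [->|[y [H1 H2]]].
  - rewrite N_v0 in E; discriminate.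
  - exists y; split; auto. pose proof (N_min y k (within_sym _ _ _ H2)).
    pose proof (N_adj2 _ _ H1). lia.
Qed.

Definition nb (v : V) : list V := proj1_sig (constructive_indefinite_description _ (Hfin v)).
Lemma nb_spec v w : adj v w <-> In w (nb v).
Proof. unfold nb; destruct (constructive_indefinite_description _ _); auto. Qed.
Fixpoint ball k := match k with 0 => [v0] | S k => ball k ++ flat_map nb (ball k) end.
Lemma ball_spec k v : N v <= k -> In v (ball k).
Proof.
  revert v; induction k; intros v H; simpl.
  - left. symmetry; apply N0; lia.
  - apply in_or_app. destruct (le_lt_dec (N v) k). left; auto.
    right. destruct (N_down v) as [u [H1 H2]]. lia.
    apply in_flat_map. exists u; split. apply IHk; lia. apply nb_spec; auto.
Qed.

Lemma inj_finite (p : nat -> V) (l : list V) :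
  (forall i j, p i = p j -> i = j) -> (forall i, In (p i) l) -> False.
Proof.
  intros Hi Hl.
  assert (H : NoDup (map p (seq 0 (S (length l))))).
  { apply Injective_map_NoDup. intros x y; apply Hi. apply seq_NoDup. }
  apply NoDup_incl_length with (l' := l) in H.
  rewrite length_map, length_seq in H; lia.
  intros x Hx. apply in_map_iff in Hx. destruct Hx as [i [<- _]]. auto.
Qed.


Definition ray (p : nat -> V) := (forall i j, p i = p j -> i = j) /\ (forall i, adj (p i) (p (S i))).
Definition Esc (z : V) := exists p, p 0 = z /\ ray p /\ forall i, n < N (p i).
Definition OS v := outer_sphere adj v0 n v.

Lemma Esc_N z : Esc z -> n < N z.
Proof. intros [p [<- [_ H]]]. apply H. Qed.

Lemma OS_char v : OS v <-> N v = n /\ exists z, adj v z /\ Esc z.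
Proof.
  split.
  - intros [Hv [p [H0 [Hi [Ha Hp]]]]].
    apply norm_N in Hv. split; [symmetry; auto|].
    assert (Hne : forall i, N (p (S i)) <> n).
    { intros i E. apply (Hp (S i)). lia. apply norm_N; symmetry; auto. }
    assert (H1 : N (p 1) <= S n). { rewrite Hv, <- H0. apply N_adj; auto. }
    destruct (le_lt_dec (N (p 1)) n) as [Hl|Hl].
    + exfalso.
      assert (Hall : forall i, N (p (S i)) < n).
      { induction i. pose proof (Hne 0); lia.
        pose proof (Hne (S i)). pose proof (N_adj _ _ (Ha (S i))). lia. }
      apply (inj_finite (fun i => p (S i)) (ball n)).
      intros i j E. apply Hi in E. lia.
      intro i. apply ball_spec. pose proof (Hall i); lia.
    + exists (p 1). split. rewrite <- H0; auto.
      exists (fun i => p (S i)). split; auto. split. split.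
      intros i j E. apply Hi in E. lia. intro i; apply Ha.
      induction i. auto.
      pose proof (Hne (S i)). pose proof (N_adj2 _ _ (Ha (S i))). lia.
  - intros [Hv [z [Hz [p [H0 [[Hi Ha] Hp]]]]]].
    split. apply norm_N; symmetry; auto.
    exists (fun i => match i with 0 => v | S i => p i end).
    split; auto. split; [|split].
    + intros [|i] [|j] E; auto.
      pose proof (Hp j). rewrite <- E in H; lia.
      pose proof (Hp i). rewrite E in H; lia.
    + intros [|i]. rewrite <- H0 in Hz; auto. apply Ha.
    + intros [|i] Hi0. lia. intro E. apply norm_N in E. pose proof (Hp i). lia.
Qed.

Lemma Esc_adj x y : Esc x -> adj x y -> n < N y -> Esc y.
Proof.
  intros [p [H0 [[Hi Ha] Hp]]] Hxy Hy.
  destruct (classic (exists k, p k = y)) as [[k Hk]|Hno].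
  - exists (fun i => p (k + i)). split. rewrite Nat.add_0_r; auto.
    split. split. intros i j E. apply Hi in E. lia.
    intro i. rewrite Nat.add_succ_r. apply Ha. intro i; apply Hp.
  - exists (fun i => match i with 0 => y | S i => p i end).
    split; auto. split. split.
    + intros [|i] [|j] E; auto. exfalso; apply Hno; eauto. exfalso; apply Hno; eauto.
    + intros [|i]. rewrite H0; auto. apply Ha.
    + intros [|i]; auto.
Qed.

Lemma within_app a x y : within adj a x y -> forall b z, within adj b y z -> within adj (a + b) x z.
Proof.
  induction 1; intros b w Hw. apply within_mono with b; auto; lia.
  simpl. apply within_step with y; auto.
Qed.

Definition good u := forall k, exists w, N w = N u + k /\ within adj k u w.

Lemma good_down u k w : within adj k u w -> N w = N u + k -> forall k', k' <= k ->
  exists w', N w' = N u + k' /\ within adj k' u w'.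
Proof.
  intros W E k' Hk. destruct (within_split _ _ _ W k' Hk) as [w' [W1 W2]].
  exists w'; split; auto.
  pose proof (N_min w' _ (within_app _ _ _ (N_within u) _ _ W1)).
  pose proof (N_min w _ (within_app _ _ _ (N_within w') _ _ W2)). lia.
Qed.

Lemma good_v0 : good v0.
Proof.
  intro k. destruct (Hinf (ball k)) as [v Hv].
  assert (k < N v). { destruct (le_lt_dec (N v) k); auto. exfalso; apply Hv, ball_spec; auto. }
  rewrite N_v0. simpl.
  destruct (within_split _ _ _ (N_within v) k) as [w' [W1 W2]]. lia.
  exists w'; split; auto.
  pose proof (N_min w' _ W1).
  pose proof (N_min v _ (within_app _ _ _ (N_within w') _ _ W2)). lia.
Qed.

Lemma bound_list (l : list V) (Q : V -> Prop) (B : V -> nat -> Prop) :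
  (forall x k k', B x k -> k <= k' -> B x k') ->
  (forall x, In x l -> Q x -> exists k, B x k) ->
  exists K, forall x, In x l -> Q x -> B x K.
Proof.
  intros Hm. induction l as [|a l IH]; intros H.
  - exists 0; intros x [].
  - destruct IH as [K HK]. intros x Hx; apply H; simpl; auto.
    destruct (classic (Q a)) as [Qa|Qa].
    + destruct (H a (or_introl eq_refl) Qa) as [k Hk].
      exists (Nat.max k K). intros x [<-|Hx] Hq. apply Hm with k; auto; lia.
      apply Hm with K; auto; lia.
    + exists K. intros x [<-|Hx] Hq. contradiction. auto.
Qed.

Lemma good_step u : good u -> exists u', adj u u' /\ N u' = S (N u) /\ good u'.
Proof.
  intro Hg. apply NNPP. intro Hno.
  set (B := fun x k => ~ exists w, N w = N x + k /\ within adj k x w).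
  destruct (bound_list (nb u) (fun x => N x = S (N u)) B) as [K HK].
  - intros x k k' Hb Hk [w [E W]]. apply Hb.
    apply (good_down x k' w W E k Hk).
  - intros x Hx Hq. apply NNPP; intro H'. apply Hno. exists x. split. apply nb_spec; auto.
    split; auto. intro k. apply NNPP. intro H2. apply H'. exists k. exact H2.
  - destruct (Hg (S K)) as [w [E W]].
    destruct (withinS_inv _ _ _ W) as [<-|[y [Hy W2]]]. lia.
    pose proof (N_adj _ _ Hy).
    pose proof (N_min w _ (within_app _ _ _ (N_within y) _ _ W2)).
    apply (HK y). apply nb_spec; auto. lia.
    exists w. split; auto. lia.
Qed.

Definition gnext (u : V) : V :=
  match excluded_middle_informative (good u) with
  | left H => proj1_sig (constructive_indefinite_description _ (good_step u H))
  | right _ => u end.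
Fixpoint rr k := match k with 0 => v0 | S k => gnext (rr k) end.
Lemma gnext_spec u : good u -> adj u (gnext u) /\ N (gnext u) = S (N u) /\ good (gnext u).
Proof.
  intro G. unfold gnext. destruct (excluded_middle_informative (good u)) as [H|H]; [|contradiction].
  destruct (constructive_indefinite_description _ _) as [u' P]. exact P.
Qed.
Lemma rr_spec k : good (rr k) /\ N (rr k) = k /\ adj (rr k) (rr (S k)).
Proof.
  induction k.
  - simpl. pose proof (gnext_spec v0 good_v0). pose proof good_v0. rewrite N_v0. tauto.
  - destruct IHk as [G [E A]]. simpl in *. pose proof (gnext_spec _ G) as [A1 [E1 G1]].
    pose proof (gnext_spec _ G1). split; auto. split. lia. tauto.
Qed.

Lemma OS_nonempty : exists v, OS v.
Proof.
  exists (rr n). apply OS_char. split. apply rr_spec.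
  exists (rr (S n)). split. apply rr_spec.
  exists (fun i => rr (S n + i)). split. rewrite Nat.add_0_r; auto.
  split. split.
  - intros i j E. pose proof (proj1 (proj2 (rr_spec (S n + i)))).
    pose proof (proj1 (proj2 (rr_spec (S n + j)))). rewrite E in H. lia.
  - intro i. rewrite Nat.add_succ_r. apply rr_spec.
  - intro i. rewrite (proj1 (proj2 (rr_spec _))). lia.
Qed.

Lemma OS_finite : exists l : list V, forall v, OS v <-> In v l.
Proof.
  exists (filter (fun x => if excluded_middle_informative (OS x) then true else false) (ball n)).
  intro v. rewrite filter_In. destruct (excluded_middle_informative (OS v)) as [H|H].
  - split; auto. intros _. split; auto. apply ball_spec. apply OS_char in H. lia.
  - split. intro; contradiction. intros [_ E]; discriminate.
Qed.

Definition ed (a b p q : V) : bool := (eqv a p && eqv b q) || (eqv a q && eqv b p).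
Lemma ed_sym a b p q : ed a b p q = ed a b q p.
Proof. unfold ed. apply orb_comm. Qed.

Fixpoint crossb (a b : V) (l : list V) : bool :=
  match l with
  | x :: ((y :: _) as t) => xorb (ed a b x y) (crossb a b t)
  | _ => false end.

Lemma crossb_cons2 a b x y l : crossb a b (x :: y :: l) = xorb (ed a b x y) (crossb a b (y :: l)).
Proof. reflexivity. Qed.

Lemma crossb_app a b l1 u r :
  crossb a b (l1 ++ u :: r) = xorb (crossb a b (l1 ++ [u])) (crossb a b (u :: r)).
Proof.
  induction l1 as [|x l1 IH].
  - simpl. reflexivity.
  - destruct l1 as [|y l1].
    + simpl app. rewrite crossb_cons2. simpl crossb at 2. rewrite xorb_false_r. reflexivity.
    + simpl app. rewrite !crossb_cons2. simpl app in IH. rewrite IH. rewrite xorb_assoc. reflexivity.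
Qed.

Definition inT (a : V) (t : V*V*V) : bool :=
  match t with (u,x,w) => eqv a u || eqv a x || eqv a w end.
Definition mT a b c t := inT a t && inT b t && inT c t.
Fixpoint phi (L : list (V*V*V)) (p q r : V) : bool :=
  match L with [] => false | t :: L => xorb (mT p q r t) (phi L p q r) end.
Definition triT (t : V*V*V) : Prop := match t with (u,x,w) => tri u x w end.
Definition Inv (g : list V) := exists L, (forall t, In t L -> triT t) /\
   forall a b c d, tri a b c -> tri a b d -> c <> d ->
     crossb a b g = xorb (phi L a b c) (phi L a b d).

Lemma inT_spec y u x w : inT y (u,x,w) = true <-> y = u \/ y = x \/ y = w.
Proof.
  simpl. rewrite !orb_true_iff.
  destruct (eqv_spec y u), (eqv_spec y x), (eqv_spec y w); intuition congruence.
Qed.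

Ltac solve_eqv := repeat match goal with
 | |- context [eqv ?p ?p] => rewrite (eqv_refl p)
 | H : ?p <> ?q |- context [eqv ?p ?q] => rewrite (eqv_neq p q H)
 | H : ?q <> ?p |- context [eqv ?p ?q] => rewrite (eqv_neq p q (not_eq_sym H))
 | |- context [eqv ?p ?q] => destruct (eqv_spec p q); [subst; try congruence | ]
 end; simpl; try congruence; auto.

Lemma L1 a b u x w : tri u x w -> a <> b ->
  xorb (ed a b u x) (xorb (ed a b x w) (ed a b u w)) = inT a (u,x,w) && inT b (u,x,w).
Proof.
  intros T Hab. pose proof (tri_ab _ _ _ T). pose proof (tri_bc _ _ _ T). pose proof (tri_ac _ _ _ T).
  unfold ed, inT. solve_eqv.
Qed.

Lemma tri_all u x w : tri u x w ->
  tri u x w /\ tri x u w /\ tri u w x /\ tri w x u /\ tri x w u /\ tri w u x.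
Proof.
  intro T. pose proof (tri12 _ _ _ T). pose proof (tri23 _ _ _ T). pose proof (tri13 _ _ _ T).
  pose proof (tri12 _ _ _ H0). pose proof (tri23 _ _ _ H). tauto.
Qed.

Lemma two_faces a b c d : tri a b c -> tri a b d -> c <> d -> forall e, tri a b e -> e = c \/ e = d.
Proof.
  intros Tc Td Hcd e Te. destruct (Hedge a b) as [c' [d' [H1 [H2 [H3 H4]]]]].
  apply (Htadj _ _ _ Tc).
  destruct (H4 _ Tc), (H4 _ Td), (H4 _ Te); subst; auto; congruence.
Qed.

Lemma L2 a b c d u x w : tri u x w -> tri a b c -> tri a b d -> c <> d ->
  inT a (u,x,w) = true -> inT b (u,x,w) = true -> xorb (inT c (u,x,w)) (inT d (u,x,w)) = true.
Proof.
  intros T Tc Td Hcd Ha Hb.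
  assert (He : exists e, tri a b e /\ forall y, (y = u \/ y = x \/ y = w) <-> (y = a \/ y = b \/ y = e)).
  { apply inT_spec in Ha, Hb. pose proof (tri_ab _ _ _ Tc) as Hab.
    pose proof (tri_all _ _ _ T).
    destruct Ha as [-> | [-> | ->]], Hb as [-> | [-> | ->]]; try congruence;
    [exists w|exists x|exists w|exists u|exists x|exists u]; (split; [tauto| intro y; tauto]). }
  destruct He as [e [Te He]].
  pose proof (two_faces _ _ _ _ Tc Td Hcd e Te) as Hcd'.
  pose proof (tri_ab _ _ _ Tc). pose proof (tri_bc _ _ _ Tc). pose proof (tri_ac _ _ _ Tc).
  pose proof (tri_bc _ _ _ Td). pose proof (tri_ac _ _ _ Td).
  assert (Ic : inT c (u,x,w) = true <-> c = e). { rewrite inT_spec, He. intuition congruence. }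
  assert (Id : inT d (u,x,w) = true <-> d = e). { rewrite inT_spec, He. intuition congruence. }
  destruct (inT c (u,x,w)), (inT d (u,x,w)); simpl; auto.
  - exfalso. apply Hcd. transitivity e. apply Ic; auto. symmetry; apply Id; auto.
  - exfalso. destruct Hcd' as [E|E]. subst. assert (false = true) by (apply Ic; auto). discriminate.
    subst. assert (false = true) by (apply Id; auto). discriminate.
Qed.

Lemma PT a b c d u x w : tri u x w -> tri a b c -> tri a b d -> c <> d ->
  xorb (ed a b u x) (xorb (ed a b x w) (ed a b u w)) = xorb (mT a b c (u,x,w)) (mT a b d (u,x,w)).
Proof.
  intros T Tc Td Hcd. rewrite L1; auto. 2: exact (tri_ab _ _ _ Tc).
  unfold mT. destruct (inT a (u,x,w)) eqn:Ea, (inT b (u,x,w)) eqn:Eb; simpl; auto.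
  symmetry. apply (L2 a b c d u x w); auto.
Qed.

Lemma Inv_move g g' : walk_move V adj tri g g' -> (Inv g <-> Inv g').
Proof.
  intro M. destruct M as [l1 l2 u w Huw|l1 l2 u x w T]; simpl app.
  - assert (E : forall a b, crossb a b (l1 ++ u :: l2) = crossb a b (l1 ++ u :: w :: u :: l2)).
    { intros a b. rewrite (crossb_app a b l1 u l2), (crossb_app a b l1 u (w :: u :: l2)), !crossb_cons2.
      rewrite (ed_sym a b w u).
      destruct (ed a b u w), (crossb a b (l1 ++ [u])), (crossb a b (u :: l2)); reflexivity. }
    split; intros [L [HL HI]]; exists L; split; auto; intros a b c d Tc Td Hcd.
    rewrite <- E; auto. rewrite E; auto.
  - assert (E : forall a b, crossb a b (l1 ++ u :: x :: w :: l2) =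
       xorb (crossb a b (l1 ++ u :: w :: l2)) (xorb (ed a b u x) (xorb (ed a b x w) (ed a b u w)))).
    { intros a b. rewrite (crossb_app a b l1 u (x :: w :: l2)), (crossb_app a b l1 u (w :: l2)), !crossb_cons2.
      destruct (ed a b u w), (ed a b u x), (ed a b x w), (crossb a b (l1 ++ [u])),
        (crossb a b (w :: l2)); reflexivity. }
    split; intros [L [HL HI]]; exists ((u,x,w) :: L); split;
      try (intros t [<-|Ht]; [exact T|auto]); intros a b c d Tc Td Hcd; simpl phi.
    + rewrite E, (HI a b c d Tc Td Hcd), (PT a b c d u x w T Tc Td Hcd).
      destruct (phi L a b c), (phi L a b d), (mT a b c (u,x,w)), (mT a b d (u,x,w)); reflexivity.
    + pose proof (HI a b c d Tc Td Hcd) as H. rewrite E, (PT a b c d u x w T Tc Td Hcd) in H.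
      destruct (crossb a b (l1 ++ u :: w :: l2)), (phi L a b c), (phi L a b d),
        (mT a b c (u,x,w)), (mT a b d (u,x,w)); simpl in *; congruence.
Qed.

Lemma Inv_homotopic g g' : walk_homotopic adj tri g g' -> (Inv g <-> Inv g').
Proof.
  induction 1. apply Inv_move; auto. tauto. tauto. tauto.
Qed.

Lemma Inv_closed v l : walk adj (v :: l ++ [v]) -> Inv (v :: l ++ [v]).
Proof.
  intro W. apply (Inv_homotopic _ _ (Hsc v l W)).
  exists []. split. intros t []. intros. reflexivity.
Qed.

Lemma phi_12 L p q r : phi L p q r = phi L q p r.
Proof.
  induction L as [|t L IH]; simpl; auto. rewrite IH. unfold mT.
  destruct (inT p t), (inT q t); reflexivity.
Qed.
Lemma phi_23 L p q r : phi L p q r = phi L p r q.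
Proof.
  induction L as [|t L IH]; simpl; auto. rewrite IH. unfold mT.
  destruct (inT p t), (inT q t), (inT r t); reflexivity.
Qed.

Definition verts (L : list (V*V*V)) : list V :=
  flat_map (fun t => match t with (u,x,w) => [u;x;w] end) L.
Lemma phi_true_in L x p q : phi L x p q = true -> In x (verts L).
Proof.
  induction L as [|[[u y] w] L IH]; simpl phi. discriminate.
  intro H. change (In x ([u;y;w] ++ verts L)). apply in_or_app.
  destruct (mT x p q (u,y,w)) eqn:E.
  - left. unfold mT in E. apply andb_true_iff in E as [E _]. apply andb_true_iff in E as [E _].
    apply inT_spec in E. simpl. intuition.
  - right. apply IH. exact H.
Qed.

Lemma crossb_notin x w l : ~ In x l -> crossb x w l = false.
Proof.
  induction l as [|p l IH]; intro H. reflexivity.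
  destruct l as [|q l]. reflexivity.
  rewrite crossb_cons2. rewrite IH. 2: { intro; apply H; simpl; auto. }
  unfold ed. rewrite (eqv_neq x p), (eqv_neq x q). reflexivity.
  intro; apply H; simpl; auto. intro; apply H; simpl; auto.
Qed.

Lemma face_of x y : adj x y -> exists c, tri x y c.
Proof. intro H. destruct (Hedge x y H) as [c [_ [_ [T _]]]]. eauto. Qed.

Section Sig.
Variable g : list V.
Variable L : list (V*V*V).
Hypothesis HI : forall a b c d, tri a b c -> tri a b d -> c <> d ->
  crossb a b g = xorb (phi L a b c) (phi L a b d).

Definition Sig x s := forall p q, tri x p q -> phi L x p q = s.

Lemma sig_edge x p q q' : ~ In x g -> tri x p q -> tri x p q' -> phi L x p q = phi L x p q'.
Proof.
  intros Hx T T'. destruct (classic (q = q')) as [->|Hq]. auto.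
  pose proof (HI x p q q' T T' Hq) as H. rewrite crossb_notin in H; auto.
  destruct (phi L x p q), (phi L x p q'); simpl in H; congruence.
Qed.

Lemma sig_const x p q : ~ In x g -> tri x p q -> Sig x (phi L x p q).
Proof.
  intros Hx T p' q' T'.
  assert (A1 : adj x p) by (apply (Htadj _ _ _ T)).
  assert (A2 : adj x p') by (apply (Htadj _ _ _ T')).
  pose proof (clos_rt_rt1n _ _ _ _ (Hlink x p p' A1 A2)) as C.
  assert (K : forall a b, clos_refl_trans_1n V (fun a b => tri x a b) a b ->
     forall c d, tri x a c -> tri x b d -> phi L x a c = phi L x b d).
  { clear -HI Hx Htperm Htadj Hirr. intros a b C'. induction C' as [a|a y b Ty C' IH]; intros c d Tc Td.
    - apply sig_edge; auto.
    - rewrite (sig_edge x a c y Hx Tc Ty). rewrite phi_23. apply IH; auto. apply tri23; auto. }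
  symmetry. apply (K p p' C q q' T T').
Qed.

Lemma sig_adj x y s : ~ In x g -> ~ In y g -> adj x y -> Sig x s -> Sig y s.
Proof.
  intros Hx Hy A S. destruct (face_of x y A) as [c T].
  pose proof (sig_const y x c Hy (tri12 _ _ _ T)) as H.
  rewrite <- phi_12, (S y c T) in H. exact H.
Qed.

Lemma ray_sig p : ray p -> (forall i, ~ In (p i) g) -> Sig (p 0) true -> False.
Proof.
  intros [Hi Ha] Hg S0.
  assert (Sa : forall i, Sig (p i) true).
  { induction i; auto. apply sig_adj with (p i); auto. }
  apply (inj_finite p (verts L) Hi). intro i.
  destruct (face_of _ _ (Ha i)) as [c T].
  apply (phi_true_in L (p i) (p (S i)) c). apply Sa; auto.
Qed.

Lemma avoid_ray_false x p q : tri x p q ->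
  (exists r, r 0 = x /\ ray r /\ forall i, ~ In (r i) g) -> phi L x p q = false.
Proof.
  intros T [r [H0 [R Hr]]].
  destruct (phi L x p q) eqn:E; auto. exfalso.
  apply (ray_sig r R Hr). rewrite H0. rewrite <- E. apply sig_const; auto.
  rewrite <- H0; auto.
Qed.

Lemma link_flip v s : (forall t, tri v (s t) (s (S t))) -> (forall t, s (S (S t)) <> s t) ->
  forall t, crossb v (s (S t)) g =
     xorb (phi L v (s t) (s (S t))) (phi L v (s (S t)) (s (S (S t)))).
Proof.
  intros T NB t. rewrite (HI v (s (S t)) (s t) (s (S (S t)))).
  rewrite (phi_23 L v (s (S t)) (s t)). reflexivity.
  apply tri23; auto. auto. auto.
Qed.

Lemma flip v s A B al i : (forall t, tri v (s t) (s (S t))) -> (forall t, s (S (S t)) <> s t) ->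
  (forall w, crossb v w g = xorb (eqv w A) (eqv w B)) -> A <> B -> s al = A ->
  (forall t, i < t < al -> s t <> A /\ s t <> B) -> i < al ->
  phi L v (s al) (s (S al)) = false -> phi L v (s i) (s (S i)) = true.
Proof.
  intros T NB Hc HAB Ha Hr Hi Hf.
  destruct al as [|a']. lia.
  assert (Hbase : phi L v (s a') (s (S a')) = true).
  { pose proof (link_flip v s T NB a') as H. rewrite Hf, Hc in H.
    replace (eqv (s (S a')) A) with true in H by (rewrite Ha; symmetry; apply eqv_refl).
    replace (eqv (s (S a')) B) with false in H by (rewrite Ha; symmetry; apply eqv_neq; auto).
    destruct (phi L v (s a') (s (S a'))); simpl in H; congruence. }
  assert (Hd : forall d t, t + d = a' -> i <= t -> phi L v (s t) (s (S t)) = true).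
  { induction d; intros t Ht Hit.
    - rewrite Nat.add_0_r in Ht. subst; auto.
    - pose proof (IHd (S t) ltac:(lia) ltac:(lia)) as H.
      pose proof (link_flip v s T NB t) as H2.
      destruct (Hr (S t) ltac:(lia)) as [N1 N2].
      rewrite Hc, (eqv_neq _ _ N1), (eqv_neq _ _ N2), H in H2.
      destruct (phi L v (s t) (s (S t))); simpl in H2; congruence. }
  apply (Hd (a' - i) i); lia.
Qed.

End Sig.

Section Cyc.
Variable P : V -> Prop.
Variable R : V -> V -> Prop.
Hypothesis Rsym : forall x y, R x y -> R y x.
Hypothesis Rirr : forall x, ~ R x x.
Hypothesis Pfin : exists l, forall x, P x -> In x l.
Hypothesis deg2 : forall x, P x -> exists a b, a <> b /\ R x a /\ R x b /\ P a /\ P b /\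
  forall c, R x c -> P c -> c = a \/ c = b.

Lemma deg2' x y1 y2 : P x -> R x y1 -> R x y2 -> P y1 -> P y2 -> y1 <> y2 ->
  forall c, R x c -> P c -> c = y1 \/ c = y2.
Proof.
  intros Px R1 R2 P1 P2 H12 c Rc Pc.
  destruct (deg2 x Px) as [a [b [Hab [Ra [Rb [Pa [Pb H]]]]]]].
  destruct (H _ R1 P1), (H _ R2 P2), (H _ Rc Pc); subst; auto; congruence.
Qed.

Lemma next_ex p c : P c -> P p -> R c p -> exists y, R c y /\ P y /\ y <> p.
Proof.
  intros Pc Pp Rcp. destruct (deg2 c Pc) as [a [b [Hab [Ra [Rb [Pa [Pb H]]]]]]].
  destruct (classic (a = p)) as [->|Hap]. exists b; auto. exists a; auto.
Qed.

Definition cnext p c : V :=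
  match excluded_middle_informative (exists y, R c y /\ P y /\ y <> p) with
  | left H => proj1_sig (constructive_indefinite_description _ H)
  | right _ => c end.

Lemma cnext_spec p c : P c -> P p -> R c p -> R c (cnext p c) /\ P (cnext p c) /\ cnext p c <> p.
Proof.
  intros Pc Pp Rcp. unfold cnext.
  destruct (excluded_middle_informative _) as [H|H].
  - destruct (constructive_indefinite_description _ H) as [y Hy]; simpl; auto.
  - exfalso; apply H, next_ex; auto.
Qed.

Variables x0 x1 : V.
Hypothesis Px0 : P x0.
Hypothesis Px1 : P x1.
Hypothesis R01 : R x0 x1.

Fixpoint sp k : V * V := match k with
  | 0 => (x0, x1)
  | S k => (snd (sp k), cnext (fst (sp k)) (snd (sp k))) end.
Definition cs k := fst (sp k).
Lemma cs_SS k : cs (S (S k)) = cnext (cs k) (cs (S k)).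
Proof. reflexivity. Qed.

Lemma cs_inv k : P (cs k) /\ P (cs (S k)) /\ R (cs k) (cs (S k)).
Proof.
  induction k as [|k [H1 [H2 H3]]]. simpl. auto.
  pose proof (cnext_spec (cs k) (cs (S k)) H2 H1 (Rsym _ _ H3)) as [A [B C]].
  rewrite cs_SS. auto.
Qed.
Lemma cs_nb k : cs (S (S k)) <> cs k.
Proof.
  pose proof (cs_inv k) as [H1 [H2 H3]].
  pose proof (cnext_spec (cs k) (cs (S k)) H2 H1 (Rsym _ _ H3)) as [A [B C]].
  rewrite cs_SS. auto.
Qed.

Lemma cycle_ex : exists j, 3 <= j /\ cs j = x0 /\
  (forall t t', t < j -> t' < j -> cs t = cs t' -> t = t').
Proof.
  destruct Pfin as [l Hl].
  assert (Hrep : exists j, exists i, i < j /\ cs i = cs j).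
  { apply NNPP. intro H. apply (inj_finite cs l).
    - intros i j E. destruct (lt_eq_lt_dec i j) as [[Hij|Hij]|Hij]; auto; exfalso; apply H; eauto.
    - intro i. apply Hl. apply cs_inv. }
  destruct (least_ex _ Hrep) as [j [[i [Hij E]] Hmin]].
  assert (Hinj : forall t t', t < j -> t' < j -> cs t = cs t' -> t = t').
  { intros t t' Ht Ht' Et. destruct (lt_eq_lt_dec t t') as [[H|H]|H]; auto.
    exfalso; apply (Hmin t'); eauto. exfalso; apply (Hmin t); eauto. }
  assert (Hi0 : i = 0).
  { destruct i as [|i']; auto. exfalso.
    destruct j as [|j']. lia.
    pose proof (cs_inv i') as [Q1 [Q2 Q3]].
    pose proof (cs_inv (S i')) as [_ [Q4 Q5]].
    pose proof (cs_inv j') as [Q6 [_ Q7]].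
    pose proof (cs_nb i') as NB.
    rewrite <- E in Q7.
    destruct (deg2' (cs (S i')) (cs i') (cs (S (S i'))) Q2 (Rsym _ _ Q3) Q5 Q1 Q4 (not_eq_sym NB)
      (cs j') (Rsym _ _ Q7) Q6) as [F|F].
    - apply (Hmin j'). lia. exists i'. split. lia. auto.
    - destruct (lt_eq_lt_dec (S (S i')) j') as [[H|H]|H].
      + apply (Hmin j'). lia. exists (S (S i')). split; auto.
      + subst j'. apply (cs_nb (S i')). rewrite <- E. reflexivity.
      + assert (j' = S i') by lia. subst j'. apply (Rirr (cs (S i'))). rewrite E at 2. auto. }
  subst i. exists j. split; [|split]; auto.
  destruct j as [|[|[|j]]]; try lia.
  - exfalso. simpl in E. unfold cs in E; simpl in E. apply (Rirr x0). rewrite E at 2. auto.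
  - exfalso. apply (cs_nb 0). auto.
Qed.

End Cyc.

Lemma cycle_pkg (P : V -> Prop) (R : V -> V -> Prop) :
  (forall x y, R x y -> R y x) -> (forall x, ~ R x x) -> (exists l, forall x, P x -> In x l) ->
  (forall x, P x -> exists a b, a <> b /\ R x a /\ R x b /\ P a /\ P b /\
     forall c, R x c -> P c -> c = a \/ c = b) ->
  forall x0 x1, P x0 -> P x1 -> R x0 x1 ->
  exists s j, s 0 = x0 /\ s 1 = x1 /\ 3 <= j /\ (forall t, P (s t)) /\
    (forall t, R (s t) (s (S t))) /\ (forall t, s (S (S t)) <> s t) /\
    (forall t, s (t + j) = s t) /\ (forall t t', t < j -> t' < j -> s t = s t' -> t = t') /\
    (forall t y, R (s t) y -> P y -> exists t', t' < j /\ s t' = y).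
Proof.
  intros Rsym Rirr Pfin deg2 x0 x1 Px0 Px1 R01.
  set (s := cs P R x0 x1).
  destruct (cycle_ex P R Rsym Rirr Pfin deg2 x0 x1 Px0 Px1 R01) as [j [Hj [Ej Hinj]]].
  fold s in Ej, Hinj.
  assert (Inv1 : forall k, P (s k) /\ P (s (S k)) /\ R (s k) (s (S k))) by
    (intro k; apply (cs_inv P R Rsym deg2 x0 x1 Px0 Px1 R01)).
  assert (NB : forall k, s (S (S k)) <> s k) by
    (intro k; apply (cs_nb P R Rsym deg2 x0 x1 Px0 Px1 R01)).
  assert (SS : forall k, s (S (S k)) = cnext P R (s k) (s (S k))) by reflexivity.
  assert (Per : forall t, s (t + j) = s t).
  { destruct j as [|[|[|k]]]; try lia.
    assert (E1 : s (S (S (S (S k)))) = x1).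
    { rewrite SS, Ej.
      pose proof (Inv1 (S (S k))) as [A1 [A2 A3]]. rewrite Ej in A2, A3.
      pose proof (cnext_spec P R deg2 (s (S (S k))) x0 Px0 A1 (Rsym _ _ A3)) as [B1 [B2 B3]].
      assert (Hne : x1 <> s (S (S k))).
      { intro E. change x1 with (s 1) in E. apply Hinj in E; lia. }
      destruct (deg2' P R deg2 x0 x1 (s (S (S k))) Px0 R01 (Rsym _ _ A3) Px1 A1 Hne _ B1 B2); auto.
      contradiction. }
    assert (K : forall t, s (t + S (S (S k))) = s t /\ s (S t + S (S (S k))) = s (S t)).
    { induction t as [|t [IH1 IH2]]. simpl. split; auto.
      split; auto. simpl plus. rewrite SS. simpl plus in IH1, IH2. rewrite IH1, IH2. symmetry; apply SS. }
    intro t; apply K. }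
  exists s, j. split; [reflexivity|]. split; [reflexivity|]. split; auto.
  split. intro t; apply Inv1. split. intro t; apply Inv1. split; auto. split; auto. split; auto.
  assert (Red : forall t, exists t', t' < j /\ s t' = s t).
  { intro t. induction t as [t IH] using lt_wf_ind.
    destruct (le_lt_dec j t) as [H|H].
    - destruct (IH (t - j)) as [t' [H1 H2]]. lia. exists t'. split; auto.
      rewrite H2. rewrite <- (Per (t - j)). f_equal. lia.
    - eauto. }
  intros t y Rt Py.
  assert (Ne : s (t + j) = s t) by apply Per.
  destruct (t + j) as [|m] eqn:Em. lia.
  pose proof (Inv1 m) as [C1 [C2 C3]]. pose proof (Inv1 (S m)) as [_ [C4 C5]].
  rewrite Ne in C2, C3, C5. 
  destruct (deg2' P R deg2 (s t) (s m) (s (S (S m))) C2 (Rsym _ _ C3) C5 C1 C4 (not_eq_sym (NB m)) y Rt Py)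
    as [-> | ->]; apply Red.
Qed.

Lemma walk_cons2 x y l : walk adj (x :: y :: l) <-> adj x y /\ walk adj (y :: l).
Proof. reflexivity. Qed.
Lemma walk_app l1 u l2 : walk adj (l1 ++ [u]) -> walk adj (u :: l2) -> walk adj (l1 ++ u :: l2).
Proof.
  induction l1 as [|x l1 IH]; intros W1 W2. exact W2.
  destruct l1 as [|y l1].
  - change (walk adj (x :: u :: l2)). change (walk adj [x; u]) in W1.
    destruct W1 as [A _]. split; auto.
  - change (walk adj (x :: y :: (l1 ++ u :: l2))). change (walk adj (x :: y :: (l1 ++ [u]))) in W1.
    destruct W1 as [A W1]. split; auto.
Qed.
Lemma walk_snoc l y x : walk adj (l ++ [y]) -> adj y x -> walk adj (l ++ [y; x]).
Proof. intros W A. apply walk_app; auto. simpl; auto. Qed.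
Lemma walk_rev l : walk adj l -> walk adj (rev l).
Proof.
  induction l as [|x l IH]; simpl; auto.
  destruct l as [|y l]; simpl; auto.
  intros [A W]. specialize (IH W). simpl in IH.
  rewrite <- app_assoc. simpl. apply walk_snoc; auto.
Qed.
Lemma last_cons (y : V) (l : list V) (x : V) : last (y :: l) x = last l y.
Proof.
  revert y x; induction l as [|a l IH]; intros y x. reflexivity.
  transitivity (last l a). exact (IH a x). symmetry. exact (IH a y).
Qed.
Lemma walk_snoc_last x l z : walk adj (x :: l) -> adj (last l x) z -> walk adj (x :: l ++ [z]).
Proof.
  revert x; induction l as [|y l IH]; intros x W A.
  - split; auto.
  - destruct W as [A1 W]. rewrite last_cons in A. split; [auto| apply (IH y W A)].
Qed.

Lemma down_path_gen k : forall x, N x = k -> 0 < k ->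
  exists l, walk adj (x :: l ++ [v0]) /\ forall y, In y l -> N y < N x.
Proof.
  induction k as [k IH] using lt_wf_ind. intros x Hx Hk.
  destruct (N_down x) as [u [A E]]. lia.
  destruct (N u) eqn:Eu.
  - apply N0 in Eu. subst u. exists []. simpl. split; auto. intros y [].
  - destruct (IH (N u) ltac:(lia) u eq_refl ltac:(lia)) as [l [W Hl]].
    exists (u :: l). split. simpl. split; auto.
    intros y [<-|Hy]. lia. pose proof (Hl y Hy). lia.
Qed.
Lemma down_path x : 0 < N x -> exists l, walk adj (x :: l ++ [v0]) /\ forall y, In y l -> N y < N x.
Proof. intro H. apply (down_path_gen (N x)); auto. Qed.
Lemma up_path x : 0 < N x -> exists l, walk adj (v0 :: l ++ [x]) /\ forall y, In y l -> N y < N x.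
Proof.
  intro H. destruct (down_path x H) as [l [W Hl]].
  exists (rev l). split.
  - apply walk_rev in W. simpl in W. rewrite rev_app_distr in W. simpl in W. exact W.
  - intros y Hy. apply Hl. apply in_rev; auto.
Qed.

Definition Cg (g : list V) := clos_refl_trans V (fun p q => adj p q /\ ~ In p g /\ ~ In q g).
Lemma walk_Cg g x l y : walk adj (x :: l ++ [y]) -> (forall z, In z (x :: l ++ [y]) -> ~ In z g) ->
  Cg g x y.
Proof.
  revert x; induction l as [|z l IH]; intros x W H; simpl in *.
  - apply rt_step. destruct W as [A _]. split; auto.
  - destruct W as [A W]. apply rt_trans with z. apply rt_step. split; auto.
    apply IH; auto.
Qed.

Lemma Cg_sig g L (HI : forall a b c d, tri a b c -> tri a b d -> c <> d ->
  crossb a b g = xorb (phi L a b c) (phi L a b d)) x y s :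
  Cg g x y -> Sig L x s -> Sig L y s.
Proof.
  induction 1; auto. intro H'. destruct H as [A [B C]]. apply (sig_adj g L HI x y); auto.
Qed.

Lemma phi_13 L p q r : phi L p q r = phi L r q p.
Proof. rewrite phi_23, phi_12, phi_23. reflexivity. Qed.

Definition avoid_ray (g : list V) (x : V) := exists r, r 0 = x /\ ray r /\ forall k, ~ In (r k) g.

Lemma core v l s al i :
  walk adj (v :: l ++ [v]) ->
  (forall t, tri v (s t) (s (S t))) -> (forall t, s (S (S t)) <> s t) ->
  forall be, (forall w, crossb v w (v :: l ++ [v]) = xorb (eqv w (s al)) (eqv w (s be))) ->
  s al <> s be ->
  (forall t, i < t < al -> s t <> s al /\ s t <> s be) -> i < al ->
  avoid_ray (v :: l ++ [v]) (s (S al)) ->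
  ~ In (s i) (v :: l ++ [v]) ->
  forall y, Cg (v :: l ++ [v]) (s i) y -> avoid_ray (v :: l ++ [v]) y -> False.
Proof.
  intros W T NB be Hc Hab Hr Hi Ra Hsi y C Ry.
  destruct (Inv_closed v l W) as [L [_ HI]].
  set (g := v :: l ++ [v]) in *.
  assert (F : phi L v (s al) (s (S al)) = false).
  { rewrite phi_13, phi_23. apply (avoid_ray_false g L HI). apply tri23, tri13; auto. auto. }
  pose proof (flip g L HI v s (s al) (s be) al i T NB Hc Hab eq_refl Hr Hi F) as F2.
  assert (S1 : Sig L (s i) true).
  { rewrite phi_12 in F2. rewrite <- F2. apply (sig_const g L HI); auto. apply tri12; auto. }
  pose proof (Cg_sig g L HI _ _ _ C S1) as S2.
  destruct Ry as [r [H0 [R Hr']]].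
  apply (ray_sig g L HI r R Hr'). rewrite H0; auto.
Qed.

Lemma Esc_avoid g z : Esc z -> (forall w, In w g -> N w <= n) -> avoid_ray g z.
Proof.
  intros [p [H0 [R Hp]]] Hg. exists p. split; auto. split; auto.
  intros k Hk. pose proof (Hg _ Hk). pose proof (Hp k). lia.
Qed.

Lemma max_ex (Q : nat -> Prop) j : (exists t, t < j /\ Q t) ->
  exists a, a < j /\ Q a /\ forall t, a < t < j -> ~ Q t.
Proof.
  induction j as [|j IH]; intros [t [Ht Qt]]. lia.
  destruct (classic (Q j)) as [Qj|Qj].
  - exists j. split; auto. split; auto. intros; lia.
  - destruct IH as [a [Ha [Qa Hm]]]. exists t; split; auto.
    assert (t <> j) by (intro; subst; contradiction). lia.
    exists a. split; auto. split; auto. intros t' Ht'.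
    destruct (Nat.eq_dec t' j). subst; auto. apply Hm; lia.
Qed.

Lemma link_data v : OS v -> exists s j al be,
  (forall t, tri v (s t) (s (S t))) /\ (forall t, s (S (S t)) <> s t) /\
  (forall t t', t < j -> t' < j -> s t = s t' -> t = t') /\
  (forall w, adj v w -> exists t, t < j /\ s t = w) /\
  be < al /\ al < j /\ Esc (s (S al)) /\ OS (s al) /\ OS (s be) /\
  (forall t, t < j -> ~ Esc (s t) -> be <= t <= al).
Proof.
  intro Hv. pose proof Hv as Hv'. apply OS_char in Hv' as [Nv [z [Az Ez]]].
  destruct (face_of v z Az) as [c Tc].
  assert (Pc : adj v c) by apply (Htadj _ _ _ Tc).
  destruct (cycle_pkg (adj v) (fun a b => tri v a b)) with (x0 := z) (x1 := c)
    as [s [j [S0 [S1 [Hj [HP [HR [NB [Per [Inj Clo]]]]]]]]]]; auto.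
  - intros a b T; apply tri23; auto.
  - intros a T; exact (tri_bc _ _ _ T eq_refl).
  - exists (nb v). intros x Hx; apply nb_spec; auto.
  - intros x Hx. destruct (Hedge v x Hx) as [c1 [d1 [H1 [H2 [H3 H4]]]]].
    exists c1, d1. split; auto. split; auto. split; auto. split. apply (Htadj _ _ _ H2).
    split. apply (Htadj _ _ _ H3). intros c' T _. auto.
  - assert (Cov : forall w, adj v w -> exists t, t < j /\ s t = w).
    { intros w Aw. pose proof (clos_rt_rt1n _ _ _ _ (Hlink v z w Az Aw)) as C.
      assert (K : forall y, clos_refl_trans_1n V (fun a b => tri v a b) y w ->
                (exists t, t < j /\ s t = y) -> exists t, t < j /\ s t = w).
      { clear C Aw. intros y C'. induction C' as [y|y y' w' T C' IH]; intro H; auto.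
        apply IH. destruct H as [t [_ Ht]]. apply (Clo t y'). rewrite Ht; auto.
        apply (Htadj _ _ _ T). }
      apply (K z C). exists 0. split; auto. lia. }
    destruct (N_down v) as [m [Am Em]]. lia.
    destruct (Cov m Am) as [tm [Htm Etm]].
    assert (NEm : ~ Esc m). { intro E. apply Esc_N in E. lia. }
    destruct (least_ex (fun t => t < j /\ ~ Esc (s t))) as [be [[Hbe NEbe] Mbe]].
    { exists tm. rewrite Etm. auto. }
    destruct (max_ex (fun t => ~ Esc (s t)) j) as [al [Hal [NEal Mal]]].
    { exists tm. rewrite Etm. auto. }
    destruct be as [|b']. { rewrite S0 in NEbe. contradiction. }
    assert (EscS : Esc (s (S al))).
    { destruct (Nat.eq_dec (S al) j) as [E|E].
      - rewrite E. pose proof (Per 0) as P0. simpl in P0. rewrite P0, S0. auto.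
      - apply NNPP. intro H. apply (Mal (S al)); auto. lia. }
    assert (EscP : Esc (s b')).
    { apply NNPP; intro H. apply (Mbe b'). lia. split; auto. lia. }
    assert (Hnal : N (s al) = n).
    { pose proof (Esc_N _ EscS). assert (A : adj (s al) (s (S al))) by apply (Htadj _ _ _ (HR al)).
      pose proof (N_adj _ _ A). pose proof (N_adj _ _ (HP al)).
      destruct (Nat.lt_ge_cases n (N (s al))). exfalso; apply NEal; apply Esc_adj with (s (S al)); auto.
      lia. }
    assert (Hnbe : N (s (S b')) = n).
    { pose proof (Esc_N _ EscP). assert (A : adj (s b') (s (S b'))) by apply (Htadj _ _ _ (HR b')).
      pose proof (N_adj2 _ _ A). pose proof (N_adj _ _ (HP (S b'))).
      destruct (Nat.lt_ge_cases n (N (s (S b')))). exfalso; apply NEbe; apply Esc_adj with (s b'); auto.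
      lia. }
    assert (Rng : forall t, t < j -> ~ Esc (s t) -> S b' <= t <= al).
    { intros t Ht Et. split.
      - destruct (Nat.lt_ge_cases t (S b')); auto. exfalso. apply (Mbe t); auto.
      - destruct (Nat.lt_ge_cases al t); try lia. exfalso. apply (Mal t); auto. }
    exists s, j, al, (S b'). split; auto. split; auto. split; auto. split; auto.
    split.
    { destruct (Rng tm Htm) as [R1 R2]. rewrite Etm; auto.
      assert (tm <> S b'). { intro E. subst tm. rewrite Etm in Hnbe. lia. } lia. }
    split; auto. split; auto. split.
    { apply OS_char. split; auto. exists (s (S al)). split; auto. apply (Htadj _ _ _ (HR al)). }
    split; auto.
    { apply OS_char. split; auto. exists (s b'). split; auto. apply Hsym, (Htadj _ _ _ (HR b')). }
Qed.

Lemma gamma_walk v a b M : adj v a -> adj b v -> walk adj (a :: M ++ [b]) ->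
  walk adj (v :: (a :: M ++ [b]) ++ [v]).
Proof.
  intros A1 A2 W. split; auto.
  change (walk adj ((a :: M ++ [b]) ++ [v])).
  replace ((a :: M ++ [b]) ++ [v]) with ((a :: M) ++ [b; v]) by (simpl; rewrite <- app_assoc; reflexivity).
  apply walk_snoc; auto.
Qed.

Lemma gamma_cross v a b M : ~ In v (a :: M ++ [b]) ->
  forall w, crossb v w (v :: (a :: M ++ [b]) ++ [v]) = xorb (eqv w a) (eqv w b).
Proof.
  intros H w.
  assert (Ha : v <> a) by (intro E; apply H; left; auto).
  assert (Hb : v <> b) by (intro E; apply H; right; apply in_or_app; right; left; auto).
  replace ((a :: M ++ [b]) ++ [v]) with ((a :: M) ++ b :: [v]) by (simpl; rewrite <- app_assoc; reflexivity).
  change (v :: (a :: M) ++ b :: [v]) with (v :: a :: (M ++ b :: [v])).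
  rewrite crossb_cons2.
  change (a :: M ++ b :: [v]) with ((a :: M) ++ b :: [v]).
  rewrite crossb_app. rewrite crossb_notin by exact H.
  rewrite crossb_cons2. simpl crossb.
  unfold ed. rewrite eqv_refl, (eqv_neq v a Ha), (eqv_neq v b Hb).
  destruct (eqv w a), (eqv w b); reflexivity.
Qed.

Lemma nbr_two v s j al be :
  (forall t, tri v (s t) (s (S t))) -> (forall t, s (S (S t)) <> s t) ->
  (forall t t', t < j -> t' < j -> s t = s t' -> t = t') ->
  (forall w, adj v w -> exists t, t < j /\ s t = w) ->
  be < al -> al < j -> Esc (s (S al)) -> OS (s al) -> OS (s be) ->
  (forall t, t < j -> ~ Esc (s t) -> be <= t <= al) -> N v = n ->
  forall c, adj v c -> OS c -> c = s al \/ c = s be.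
Proof.
  intros HR NB Inj Cov Hba Hal EscS OSa OSb Rng Nv c Ac OSc.
  destruct (Cov c Ac) as [i [Hi Ei]]. subst c.
  apply OS_char in OSc as [Nc [zc [Azc Ezc]]].
  assert (NEc : ~ Esc (s i)). { intro E; apply Esc_N in E; lia. }
  destruct (Rng i Hi NEc) as [R1 R2].
  destruct (Nat.eq_dec i al) as [->|Hia]. auto.
  destruct (Nat.eq_dec i be) as [->|Hib]. auto.
  exfalso.
  pose proof OSa as OSa'. apply OS_char in OSa' as [Na _].
  pose proof OSb as OSb'. apply OS_char in OSb' as [Nb _].
  destruct (down_path (s al)) as [la [Wa Hla]]. lia.
  destruct (up_path (s be)) as [lb [Wb Hlb]]. lia.
  set (M := la ++ v0 :: lb).
  set (l := s al :: M ++ [s be]).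
  assert (Av : forall t, adj v (s t)) by (intro t; apply (Htadj _ _ _ (HR t))).
  assert (W : walk adj (v :: l ++ [v])).
  { apply gamma_walk; auto.
    replace (s al :: M ++ [s be]) with ((s al :: la) ++ v0 :: (lb ++ [s be]))
      by (unfold M; simpl; rewrite <- app_assoc; reflexivity).
    apply walk_app; auto. }
  assert (Mem : forall w, In w (v :: l ++ [v]) -> w = v \/ w = s al \/ w = s be \/ N w < n).
  { intros w Hw. unfold l, M in Hw. simpl in Hw.
    repeat (rewrite in_app_iff in Hw; simpl in Hw).
    destruct Hw as [H|[H|[[[H|[H|H]]|[H|H]]|[H|H]]]]; try subst; auto; try contradiction.
    - right; right; right. pose proof (Hla w H). lia.
    - right; right; right. rewrite N_v0. lia.
    - right; right; right. pose proof (Hlb w H). lia. }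
  assert (Bd : forall w, In w (v :: l ++ [v]) -> N w <= n).
  { intros w Hw. destruct (Mem w Hw) as [->|[->|[->|H]]]; lia. }
  assert (Hvl : ~ In v l).
  { intro H. unfold l, M in H. simpl in H. repeat (rewrite in_app_iff in H; simpl in H).
    pose proof N_v0.
    destruct H as [E|[[H|[E|H]]|[E|H]]]; try contradiction;
    first [ solve [apply (Hirr v); rewrite <- E at 2; auto]
          | solve [pose proof (Hla v H); lia]
          | solve [pose proof (Hlb v H); lia]
          | solve [rewrite <- E in Nv; lia] ]. }
  apply (core v l s al i W HR NB be (gamma_cross v (s al) (s be) M Hvl)) with (y := zc).
  - intro E. apply Inj in E; lia.
  - intros t Ht. split; intro E; apply Inj in E; lia.
  - lia.
  - apply Esc_avoid; auto.
  - intro H. destruct (Mem _ H) as [E|[E|[E|E]]].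
    + apply (Hirr v). rewrite <- E at 2. auto.
    + apply Inj in E; lia.
    + apply Inj in E; lia.
    + lia.
  - apply rt_step. split; auto. split.
    + intro H. destruct (Mem _ H) as [E|[E|[E|E]]].
      * apply (Hirr v). rewrite <- E at 2. auto.
      * apply Inj in E; lia.
      * apply Inj in E; lia.
      * lia.
    + intro H. pose proof (Bd _ H). pose proof (Esc_N _ Ezc). lia.
  - apply Esc_avoid; auto.
Qed.

Lemma OS_deg v : OS v -> exists a b, a <> b /\ adj v a /\ adj v b /\ OS a /\ OS b /\
  forall c, adj v c -> OS c -> c = a \/ c = b.
Proof.
  intro Hv. destruct (link_data v Hv) as [s [j [al [be [HR [NB [Inj [Cov [H1 [H2 [H3 [H4 [H5 H6]]]]]]]]]]]]].
  exists (s al), (s be). split. intro E; apply Inj in E; lia.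
  split. apply (Htadj _ _ _ (HR al)). split. apply (Htadj _ _ _ (HR be)).
  split; auto. split; auto.
  apply (nbr_two v s j al be); auto. apply OS_char in Hv; tauto.
Qed.

Lemma walk_map_seq (u : nat -> V) : (forall t, adj (u t) (u (S t))) ->
  forall m k, walk adj (map u (seq k (S m))).
Proof.
  intro A. induction m; intro k. exact I.
  change (walk adj (u k :: map u (seq (S k) (S m)))).
  split. apply A. apply IHm.
Qed.

Lemma OS_conn x y : OS x -> OS y -> exists l, walk adj (x :: l) /\ last l x = y /\ Forall OS l.
Proof.
  intros Ox Oy. apply NNPP. intro Hno.
  destruct (OS_deg x Ox) as [a [b [Hab [Aa [Ab [Oa [Ob _]]]]]]].
  destruct (cycle_pkg OS adj Hsym Hirr) with (x0 := x) (x1 := a)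
    as [u [J [U0 [U1 [HJ [UP [UR [UNB [UPer [UInj _]]]]]]]]]]; auto.
  { destruct OS_finite as [l Hl]. exists l. intros z Hz; apply Hl; auto. }
  { exact OS_deg. }
  assert (Reach : forall t, exists l, walk adj (x :: l) /\ last l x = u t /\ Forall OS l).
  { intro t. exists (map u (seq 1 t)). split; [|split].
    - rewrite <- U0. change (walk adj (map u (seq 0 (S t)))). apply walk_map_seq; auto.
    - destruct t. simpl; auto. rewrite seq_S, map_app. change (map u [1 + t]) with [u (1 + t)]. rewrite last_last. reflexivity.
    - apply Forall_forall. intros w Hw. apply in_map_iff in Hw as [t' [<- _]]. auto. }
  assert (Ny : forall t, u t <> y). { intros t E. apply Hno. rewrite <- E. apply Reach. }
  destruct J as [|[|[|k]]]; try lia.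
  set (M := map u (seq 2 k)).
  set (l := u 1 :: M ++ [u (S (S k))]).
  assert (Leq : l = map u (seq 1 (S (S k)))).
  { unfold l, M. change (seq 1 (S (S k))) with (1 :: seq 2 (S k)). rewrite seq_S.
    simpl map. rewrite map_app. reflexivity. }
  assert (Inl : forall w, In w l -> exists t, 1 <= t <= S (S k) /\ w = u t).
  { intros w Hw. rewrite Leq in Hw. apply in_map_iff in Hw as [t [<- Ht]].
    apply in_seq in Ht. exists t. split; auto. lia. }
  assert (UJ : u (S (S (S k))) = x). { rewrite <- U0. apply (UPer 0). }
  assert (Hxl : ~ In x l).
  { intro H. destruct (Inl x H) as [t [Ht E]]. rewrite <- U0 in E. apply UInj in E; lia. }
  assert (W : walk adj (x :: l ++ [x])).
  { apply gamma_walk. rewrite <- U0. apply UR.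
    rewrite <- UJ. apply UR.
    fold l. rewrite Leq. apply walk_map_seq; auto. }
  pose proof (gamma_cross x (u 1) (u (S (S k))) M Hxl) as Hc0. fold l in Hc0.
  assert (Hne : u 1 <> u (S (S k))). { intro E. apply UInj in E; lia. }
  destruct (link_data x Ox) as [s [j [al [be [HR [NB [Inj [Cov [H1 [H2 [H3 [H4 [H5 H6]]]]]]]]]]]]].
  pose proof Ox as Ox'. apply OS_char in Ox' as [Nx _].
  pose proof (nbr_two x s j al be HR NB Inj Cov H1 H2 H3 H4 H5 H6 Nx) as Two.
  assert (A1 : adj x (u 1)) by (rewrite <- U0; apply UR).
  assert (A2 : adj x (u (S (S k)))) by (apply Hsym; rewrite <- UJ; apply UR).
  assert (Hc : forall w, crossb x w (x :: l ++ [x]) = xorb (eqv w (s al)) (eqv w (s be))).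
  { intro w. rewrite Hc0.
    destruct (Two _ A1 (UP 1)) as [E1|E1], (Two _ A2 (UP _)) as [E2|E2]; rewrite E1, E2 in *;
      try congruence. apply xorb_comm. }
  assert (Mem : forall w, In w (x :: l ++ [x]) -> N w = n).
  { intros w Hw. destruct Hw as [<-|Hw]; auto. apply in_app_iff in Hw.
    destruct Hw as [Hw|[<-|[]]]; auto.
    destruct (Inl w Hw) as [t [_ ->]]. apply OS_char, UP. }
  assert (Nn : forall w, N w <> n -> ~ In w (x :: l ++ [x])).
  { intros w Hw H. apply Hw, Mem, H. }
  assert (Yn : ~ In y (x :: l ++ [x])).
  { intro H. destruct H as [E|H]; [|apply in_app_iff in H; destruct H as [H|[E|[]]]].
    - apply (Ny 0). rewrite U0; auto.
    - destruct (Inl y H) as [t [_ E]]. apply (Ny t). auto.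
    - apply (Ny 0). rewrite U0; auto. }
  destruct (N_down x) as [m [Am Em]]. lia.
  destruct (Cov m Am) as [i [Hi Ei]]. subst m.
  assert (NEm : ~ Esc (s i)). { intro E. apply Esc_N in E. lia. }
  destruct (H6 i Hi NEm) as [R1 R2].
  pose proof H4 as H4'. apply OS_char in H4' as [Na _].
  pose proof H5 as H5'. apply OS_char in H5' as [Nb _].
  assert (i <> al). { intro E; rewrite E in Em. lia. }
  assert (i <> be). { intro E; rewrite E in Em. lia. }
  pose proof Oy as Oy'. apply OS_char in Oy' as [Ny' [zy [Azy Ezy]]].
  apply (core x l s al i W HR NB be Hc) with (y := zy).
  - intro E. apply Inj in E; lia.
  - intros t Ht. split; intro E; apply Inj in E; lia.
  - lia.
  - apply Esc_avoid; auto. intros w Hw. rewrite (Mem w Hw). lia.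
  - apply Nn. lia.
  - apply rt_trans with v0; [|apply rt_trans with y].
    + destruct (Nat.eq_dec (N (s i)) 0) as [E|E].
      * apply N0 in E. rewrite E. apply rt_refl.
      * destruct (down_path (s i)) as [lm [Wm Hlm]]. lia.
        apply walk_Cg with lm; auto.
        intros z Hz. apply Nn. simpl in Hz. rewrite in_app_iff in Hz. simpl in Hz.
        destruct Hz as [<-|[Hz|[<-|[]]]]. lia. pose proof (Hlm z Hz); lia. rewrite N_v0; lia.
    + destruct (up_path y) as [ly [Wy Hly]]. lia.
      apply walk_Cg with ly; auto.
      intros z Hz. simpl in Hz. rewrite in_app_iff in Hz. simpl in Hz.
      destruct Hz as [<-|[Hz|[<-|[]]]]; auto.
      apply Nn. rewrite N_v0; lia. apply Nn. pose proof (Hly z Hz); lia.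
    + apply rt_step. split; auto. split; auto. apply Nn. pose proof (Esc_N _ Ezy). lia.
  - apply Esc_avoid; auto. intros w Hw. rewrite (Mem w Hw). lia.
Qed.

Lemma main_in : induced_cycle_graph adj (outer_sphere adj v0 n).
Proof.
  split. exact OS_finite. split. exact OS_nonempty. split. exact OS_conn. exact OS_deg.
Qed.

End Main.

Theorem mainTheorem14 (V : Type) (adj : V -> V -> Prop) (tri : V -> V -> V -> Prop)
  (v0 : V) (Htri : disk_triangulation adj tri) (n : nat) (Hn : 0 < n) :
  induced_cycle_graph adj (outer_sphere adj v0 n).
Proof.
  destruct Htri as (H1 & H2 & H3 & H4 & H5 & H6 & H7 & H8 & H9 & H10 & H11).
  eapply main_in; eassumption.
Qed.
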